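(* For all $x$ with $|x|<1/4$, \[ \sum_{n=0}^\infty\binom{4n}{2n}O_{2n}x^{2n}=-\frac{\sqrt{1+4x}\,\ln(1-4x)+\sqrt{1-4x}\,\ln(1+4x)}{4\sqrt{1-16x^2}} \] and \[ \sum_{n=0}^\infty\binom{4n+2}{2n+1}O_{2n+1}x^{2n+1}=-\frac{\sqrt{1+4x}\,\ln(1-4x)-\sqrt{1-4x}\,\ln(1+4x)}{4\sqrt{1-16x^2}}. \]
   Context: $O_n=\sum_{j=1}^n\frac1{2j-1}$ is the $n$th odd harmonic number ($O_0=0$). *)

(* Defs.v *)
From Stdlib Require Import Reals.
From Coquelicot Require Import Coquelicot.
Open Scope R_scope.

Fixpoint oddH (n : nat) : R :=
  match n with
  | O => 0
  | S m => oddH m + / (2 * INR (S m) - 1)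
  end.

Definition binomR (n k : nat) : R := Binomial.C n k.

(* Main.v *)
Require Import Defs.
From Stdlib Require Import Reals Lra Lia.
From Coquelicot Require Import Coquelicot.
Open Scope R_scope.

Definition bb (m : nat) : R := binomR (2 * m) m.
Definition aa (m : nat) : R := bb m * oddH m.

Lemma fact_pos' n : 0 < INR (Factorial.fact n).
Proof. apply lt_0_INR, Factorial.lt_O_fact. Qed.

Lemma bb0 : bb 0 = 1.
Proof. unfold bb, binomR, Binomial.C. simpl. field. Qed.

Lemma bb_rec m : INR (S m) * bb (S m) = (4 * INR m + 2) * bb m.
Proof.
  unfold bb, binomR, Binomial.C.
  replace (2 * S m - S m)%nat with (S m) by lia.
  replace (2 * m - m)%nat with m by lia.
  replace (2 * S m)%nat with (S (S (2 * m))) by lia.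
  rewrite !Rfunctions.fact_simpl, !mult_INR.
  pose proof (fact_pos' m). pose proof (fact_pos' (2*m)).
  pose proof (pos_INR m). rewrite !S_INR, mult_INR. replace (INR 2) with 2 by (simpl; ring). field. repeat split; lra.
Qed.

Lemma bb_pos m : 0 < bb m.
Proof. unfold bb, binomR, Binomial.C. apply Rdiv_lt_0_compat. apply fact_pos'.
  apply Rmult_lt_0_compat; apply fact_pos'. Qed.

Lemma bb_S m : bb (S m) = (4 * INR m + 2) / INR (S m) * bb m.
Proof. pose proof (pos_INR m). apply (Rmult_eq_reg_l (INR (S m))).
  rewrite bb_rec. rewrite S_INR. field. lra. rewrite S_INR; lra. Qed.

Lemma bb_mono m : bb m <= bb (S m).
Proof. rewrite bb_S. pose proof (pos_INR m). pose proof (bb_pos m). rewrite S_INR. intros.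
  assert (1 <= (4 * INR m + 2) / (INR m + 1)).
  { apply Rcomplements.Rle_div_r. lra. lra. } nra. Qed.

Lemma oddH_nonneg m : 0 <= oddH m.
Proof. induction m; cbn [oddH]. lra. rewrite S_INR. pose proof (pos_INR m). intros.
  assert (0 < / (2 * (INR m + 1) - 1)) by (apply Rinv_0_lt_compat; lra). lra. Qed.

Lemma oddH_le m : oddH m <= INR m.
Proof. induction m; cbn [oddH]. simpl; lra. rewrite S_INR. pose proof (pos_INR m). intros.
  assert (/ (2 * (INR m + 1) - 1) <= 1).
  { rewrite <- Rinv_1. apply Rinv_le_contravar; lra. } lra. Qed.

Lemma aa0 : aa 0 = 0.
Proof. unfold aa; simpl; ring. Qed.

Lemma aa_rec m : INR (S m) * aa (S m) = (4 * INR m + 2) * aa m + 2 * bb m.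
Proof.
  unfold aa. cbn [oddH]. rewrite bb_S.
  rewrite S_INR. pose proof (pos_INR m). field. lra.
Qed.
Lemma radius_cmp (a c : nat -> R) :
  (forall n, Rabs (a n) <= Rabs (c n)) -> Rbar_le (CV_radius c) (CV_radius a).
Proof.
  intros H. destruct (CV_radius_bounded c) as [_ Hc]. apply Hc.
  intros r [M HM]. destruct (CV_radius_bounded a) as [Ha _]. apply Ha.
  exists M. intros n. eapply Rle_trans; [|apply (HM n)]. rewrite !Rabs_mult.
  apply Rmult_le_compat_r; [apply Rabs_pos|auto].
Qed.

Lemma lim_inv_S : is_lim_seq (fun n => / INR (S n)) 0.
Proof.
  assert (H := is_lim_seq_inv (fun n => INR (S n)) p_infty).
  simpl in H. apply H. apply (is_lim_seq_incr_1 INR). apply is_lim_seq_INR. discriminate.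
Qed.

Lemma radius_bb : CV_radius bb = / 4.
Proof.
  apply CV_radius_finite_DAlembert.
  - intros n. pose proof (bb_pos n). lra.
  - lra.
  - apply (is_lim_seq_ext (fun n => 4 - 2 * / INR (S n))).
    + intros n. pose proof (bb_pos n). pose proof (pos_INR n).
      replace (bb (S n) / bb n) with ((4*INR n+2)/(INR n+1))
        by (rewrite bb_S, S_INR; field; lra).
      rewrite Rabs_pos_eq. rewrite S_INR. field. lra.
      unfold Rdiv. apply Rmult_le_pos; [lra|]. left; apply Rinv_0_lt_compat; lra.
    + assert (H: is_lim_seq (fun n => 4 - 2 * / INR (S n)) (4 - 2*0)).
      { apply is_lim_seq_minus'. apply is_lim_seq_const.
        pose proof (is_lim_seq_scal_l _ 2 0 lim_inv_S) as H. simpl in H. exact H. }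
      rewrite Rmult_0_r, Rminus_0_r in H. exact H.
Qed.

Lemma radius_aa : Rbar_le (/ 4) (CV_radius aa).
Proof.
  rewrite <- radius_bb. rewrite <- (CV_radius_derive bb). apply radius_cmp.
  intros n. unfold aa, PS_derive. pose proof (bb_pos n). pose proof (bb_mono n).
  pose proof (oddH_nonneg n). pose proof (oddH_le n). pose proof (pos_INR n).
  assert (bb n * oddH n <= bb n * INR n) by (apply Rmult_le_compat_l; lra).
  assert (bb n * INR n <= bb (S n) * INR n) by (apply Rmult_le_compat_r; lra).
  rewrite !Rabs_pos_eq; rewrite ?S_INR; nra.
Qed.

Lemma in_bb x : Rabs x < / 4 -> Rbar_lt (Rabs x) (CV_radius bb).
Proof. intros; rewrite radius_bb; simpl; auto. Qed.
Lemma in_aa x : Rabs x < / 4 -> Rbar_lt (Rabs x) (CV_radius aa).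
Proof. intros; eapply Rbar_lt_le_trans; [|apply radius_aa]; simpl; auto. Qed.
Lemma ode_gen (c e : nat -> R) x : Rbar_lt (Rabs x) (CV_radius c) ->
  (forall n, PS_derive c n - 4 * (match n with O => 0 | S m => PS_derive c m end) = e n) ->
  (1 - 4 * x) * PSeries (PS_derive c) x = PSeries e x.
Proof.
  intros Hx He.
  assert (ed : ex_pseries (PS_derive c) x) by (apply ex_pseries_derive; auto).
  replace ((1 - 4 * x) * PSeries (PS_derive c) x) with
    (PSeries (PS_derive c) x + (-4) * (x * PSeries (PS_derive c) x)) by ring.
  rewrite <- PSeries_incr_1. rewrite <- PSeries_scal. rewrite <- PSeries_plus.
  - apply PSeries_ext. intros n. rewrite <- He.
    unfold PS_plus, PS_scal, PS_incr_1, plus, scal; simpl. unfold mult; simpl.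
    destruct n; simpl; unfold zero; simpl; ring.
  - exact ed.
  - apply ex_pseries_scal. unfold mult; simpl; ring. apply ex_pseries_incr_1. exact ed.
Qed.
Lemma ode_bb x : Rabs x < / 4 ->
  (1 - 4 * x) * PSeries (PS_derive bb) x = 2 * PSeries bb x.
Proof.
  intros H. rewrite (ode_gen bb (fun n => 2 * bb n) x (in_bb x H)).
  - rewrite <- PSeries_scal. apply PSeries_ext. intros; reflexivity.
  - intros [|m]; unfold PS_derive.
    + rewrite bb_rec. simpl. ring.
    + rewrite bb_rec. rewrite (S_INR m). ring.
Qed.

Lemma ode_aa x : Rabs x < / 4 ->
  (1 - 4 * x) * PSeries (PS_derive aa) x = 2 * PSeries aa x + 2 * PSeries bb x.
Proof.
  intros H. rewrite (ode_gen aa (fun n => 2 * aa n + 2 * bb n) x (in_aa x H)).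
  - rewrite <- !PSeries_scal. rewrite <- PSeries_plus.
    + apply PSeries_ext. intros; reflexivity.
    + apply ex_pseries_scal. unfold mult; simpl; ring. apply CV_radius_inside, in_aa, H.
    + apply ex_pseries_scal. unfold mult; simpl; ring. apply CV_radius_inside, in_bb, H.
  - intros [|m]; unfold PS_derive.
    + rewrite aa_rec. simpl. ring.
    + rewrite aa_rec. rewrite (S_INR m). ring.
Qed.

Lemma const_quarter (f : R -> R) x : Rabs x < / 4 ->
  (forall t, Rabs t < / 4 -> is_derive f t 0) -> f x = f 0.
Proof.
  intros Hx Hd. destruct (Rabs_def2 _ _ Hx) as [h1 h2].
  destruct (Rtotal_order x 0) as [h|[h|h]].
  - apply eq_is_derive; auto. intros t Ht. apply Hd. apply Rabs_def1; lra.
  - subst; reflexivity.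
  - symmetry. apply eq_is_derive; auto. intros t Ht. apply Hd. apply Rabs_def1; lra.
Qed.

Lemma bb_closed x : Rabs x < / 4 -> PSeries bb x = / sqrt (1 - 4 * x).
Proof.
  intros H.
  assert (E : PSeries bb x * sqrt (1 - 4 * x) = 1).
  { rewrite (const_quarter (fun t => PSeries bb t * sqrt (1 - 4 * t)) x H).
    - rewrite PSeries_0, bb0. replace (1 - 4*0) with 1 by ring. rewrite sqrt_1. ring.
    - intros t Ht. destruct (Rabs_def2 _ _ Ht) as [h1 h2].
      auto_derive.
      + split. apply ex_derive_PSeries, in_bb, Ht. split; [lra|exact I].
      + rewrite Derive_PSeries by (apply in_bb, Ht).
        pose proof (ode_bb t Ht) as O.
        assert (hs : 0 < sqrt (1 - 4 * t)) by (apply sqrt_lt_R0; lra).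
        pose proof (sqrt_sqrt (1 - 4*t)) as ss.
        replace (1 + - (4 * t)) with (1 - 4 * t) by ring.
        assert (K : PSeries (PS_derive bb) t * (sqrt (1 - 4 * t) * sqrt (1 - 4 * t))
                    = 2 * PSeries bb t) by (rewrite ss by lra; rewrite <- O; ring).
        replace (1 * PSeries (PS_derive bb) t * sqrt (1 - 4 * t) +
          PSeries bb t * (- (4 * 1) * / (2 * sqrt (1 - 4 * t))))
          with ((PSeries (PS_derive bb) t * (sqrt (1 - 4 * t) * sqrt (1 - 4 * t))
                  - 2 * PSeries bb t) / sqrt (1 - 4 * t)) by (field; lra).
        rewrite K. unfold Rdiv. ring. }
  assert (hs : 0 < sqrt (1 - 4 * x)) by (apply sqrt_lt_R0; destruct (Rabs_def2 _ _ H); lra).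
  apply (Rmult_eq_reg_r (sqrt (1 - 4 * x))); [|lra]. rewrite E. field. lra.
Qed.
Lemma aa_closed x : Rabs x < / 4 ->
  PSeries aa x = - ln (1 - 4 * x) / (2 * sqrt (1 - 4 * x)).
Proof.
  intros H.
  assert (E : PSeries aa x * sqrt (1 - 4 * x) + ln (1 - 4 * x) / 2 = 0).
  { rewrite (const_quarter (fun t => PSeries aa t * sqrt (1 - 4 * t) + ln (1 - 4 * t) / 2) x H).
    - rewrite PSeries_0, aa0. replace (1 - 4*0) with 1 by ring. rewrite ln_1. field.
    - intros t Ht. destruct (Rabs_def2 _ _ Ht) as [h1 h2].
      auto_derive.
      + split. apply ex_derive_PSeries, in_aa, Ht. repeat split; lra.
      + rewrite Derive_PSeries by (apply in_aa, Ht).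
        pose proof (ode_aa t Ht) as O. rewrite (bb_closed t Ht) in O.
        replace (1 + - (4 * t)) with (1 - 4 * t) by ring.
        assert (hs : 0 < sqrt (1 - 4 * t)) by (apply sqrt_lt_R0; lra).
        pose proof (sqrt_sqrt (1 - 4*t)) as ss.
        set (s := sqrt (1 - 4 * t)) in *.
        assert (e1 : 1 - 4 * t = s * s) by (symmetry; apply ss; lra).
        rewrite e1 in O |- *.
        assert (e2 : PSeries (PS_derive aa) t = (2 * PSeries aa t + 2 * / s) / (s * s))
          by (rewrite <- O; field; lra).
        rewrite e2. field. lra. }
  assert (hs : 0 < sqrt (1 - 4 * x)) by (apply sqrt_lt_R0; destruct (Rabs_def2 _ _ H); lra).
  apply (Rmult_eq_reg_r (sqrt (1 - 4 * x))); [|lra].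
  replace (PSeries aa x * sqrt (1 - 4 * x)) with (- (ln (1 - 4 * x) / 2)) by lra.
  field. lra.
Qed.
Lemma sum_pair (c : nat -> R) N :
  sum_n (fun n => c (2 * n)%nat + c (2 * n + 1)%nat) N = sum_n c (2 * N + 1)%nat.
Proof.
  induction N.
  - rewrite sum_O. simpl. rewrite sum_Sn, sum_O. reflexivity.
  - rewrite sum_Sn, IHN.
    replace (2 * S N)%nat with (S (2*N+1)) by lia.
    replace (S (2*N+1) + 1)%nat with (S (S (2*N+1))) by lia.
    rewrite (sum_Sn c (S (2*N+1))), (sum_Sn c (2*N+1)).
    rewrite <- plus_assoc. reflexivity.
Qed.

Lemma pair_series (c : nat -> R) L :
  is_series c L -> is_series (fun n => c (2 * n)%nat + c (2 * n + 1)%nat) L.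
Proof.
  intros H. unfold is_series.
  apply (filterlim_ext (fun N => sum_n c (2 * N + 1)%nat)).
  { intros N. symmetry. apply sum_pair. }
  apply (is_lim_seq_subseq (sum_n c) L (fun N => (2 * N + 1)%nat)).
  - intros P [N HN]. exists N. intros n Hn. apply HN. lia.
  - exact H.
Qed.

Lemma series_of x : Rabs x < / 4 -> is_series (fun m => aa m * x ^ m) (PSeries aa x).
Proof.
  intros H. pose proof (PSeries_correct aa x (CV_radius_inside _ _ (in_aa x H))) as P.
  unfold is_pseries in P. eapply is_series_ext; [|exact P].
  intros n. unfold scal; simpl. unfold mult; simpl. rewrite pow_n_pow. ring.
Qed.

Lemma negpow_even n y : (- y) ^ (2 * n) = y ^ (2 * n).
Proof. induction n. reflexivity. replace (2 * S n)%nat with (S (S (2 * n))) by lia.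
  simpl. simpl in IHn. rewrite IHn. ring. Qed.

Lemma negpow_odd n y : (- y) ^ (2 * n + 1) = - y ^ (2 * n + 1).
Proof. rewrite Nat.add_1_r. cbn [pow]. rewrite negpow_even. ring. Qed.
Lemma value_id x : Rabs x < / 4 -> forall sg : R, (sg = 1 \/ sg = -1) ->
  / 2 * (PSeries aa x + sg * PSeries aa (- x)) =
  - (sqrt (1 + 4 * x) * ln (1 - 4 * x) + sg * (sqrt (1 - 4 * x) * ln (1 + 4 * x)))
       / (4 * sqrt (1 - 16 * x ^ 2)).
Proof.
  intros H sg _. assert (H' : Rabs (- x) < / 4) by (rewrite Rabs_Ropp; exact H).
  destruct (Rabs_def2 _ _ H) as [h1 h2].
  rewrite (aa_closed x H), (aa_closed (- x) H').
  replace (1 - 4 * - x) with (1 + 4 * x) by ring.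
  replace (1 - 16 * x ^ 2) with ((1 - 4 * x) * (1 + 4 * x)) by ring.
  assert (p1 : 0 < sqrt (1 - 4 * x)) by (apply sqrt_lt_R0; lra).
  assert (p2 : 0 < sqrt (1 + 4 * x)) by (apply sqrt_lt_R0; lra).
  rewrite sqrt_mult by lra. field. lra.
Qed.

Theorem theorem24 (x : R) (hx : Rabs x < / 4) :
  is_series (fun n : nat => binomR (4 * n) (2 * n) * oddH (2 * n) * x ^ (2 * n))
    (- (sqrt (1 + 4 * x) * ln (1 - 4 * x) + sqrt (1 - 4 * x) * ln (1 + 4 * x))
       / (4 * sqrt (1 - 16 * x ^ 2)))
  /\
  is_series (fun n : nat => binomR (4 * n + 2) (2 * n + 1) * oddH (2 * n + 1)
                             * x ^ (2 * n + 1))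
    (- (sqrt (1 + 4 * x) * ln (1 - 4 * x) - sqrt (1 - 4 * x) * ln (1 + 4 * x))
       / (4 * sqrt (1 - 16 * x ^ 2))).
Proof.
  assert (H' : Rabs (- x) < / 4) by (rewrite Rabs_Ropp; exact hx).
  pose proof (series_of x hx) as S1. pose proof (series_of (- x) H') as S2.
  split.
  - pose proof (is_series_scal (/ 2) _ _ (is_series_plus _ _ _ _ S1 S2)) as S.
    pose proof (value_id x hx 1 (or_introl eq_refl)) as V.
    replace (- (sqrt (1 + 4 * x) * ln (1 - 4 * x) + sqrt (1 - 4 * x) * ln (1 + 4 * x))
       / (4 * sqrt (1 - 16 * x ^ 2))) with (/ 2 * (PSeries aa x + 1 * PSeries aa (- x)))
      by (rewrite V; f_equal; f_equal; ring).
    rewrite Rmult_1_l.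
    eapply is_series_ext; [|apply (pair_series _ _ S)].
    intros n. cbv beta. rewrite negpow_even, negpow_odd. unfold aa, bb.
    replace (4 * n)%nat with (2 * (2 * n))%nat by lia.
    set (w := x ^ (2 * n)). set (z := x ^ (2 * n + 1)).
    set (u := binomR (2 * (2 * n)) (2 * n) * oddH (2 * n)).
    set (v := binomR (2 * (2 * n + 1)) (2 * n + 1) * oddH (2 * n + 1)).
    unfold plus, scal; simpl. unfold mult; simpl.
    match goal with |- ?a = ?b => change (@eq R a b) end. lra.
  - pose proof (is_series_scal (/ 2) _ _ (is_series_plus _ _ _ _ S1
       (is_series_scal (-1) _ _ S2))) as S.
    pose proof (value_id x hx (-1) (or_intror eq_refl)) as V.
    replace (- (sqrt (1 + 4 * x) * ln (1 - 4 * x) - sqrt (1 - 4 * x) * ln (1 + 4 * x))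
       / (4 * sqrt (1 - 16 * x ^ 2))) with (/ 2 * (PSeries aa x + -1 * PSeries aa (- x)))
      by (rewrite V; f_equal; f_equal; ring).
    eapply is_series_ext; [|apply (pair_series _ _ S)].
    intros n. cbv beta. rewrite negpow_even, negpow_odd. unfold aa, bb.
    replace (4 * n + 2)%nat with (2 * (2 * n + 1))%nat by lia.
    set (w := x ^ (2 * n)). set (z := x ^ (2 * n + 1)).
    set (u := binomR (2 * (2 * n)) (2 * n) * oddH (2 * n)).
    set (v := binomR (2 * (2 * n + 1)) (2 * n + 1) * oddH (2 * n + 1)).
    unfold plus, scal; simpl. unfold mult; simpl.
    match goal with |- ?a = ?b => change (@eq R a b) end. lra.
Qed.
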